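(* Let $z\ge1$, $X\subset[\Delta]^d$ finite, $x\in X$ and $p\in X$ fixed, and $r=\|x-p\|_2$. Let $Q\subseteq X$ be a set of at most $k$ centers containing $p$ that is a constant-factor approximation to the optimal $(k,z)$-medoids clustering on $X$ among sets containing a center at $p$, and let $\Psi$ be a constant-factor approximation to $\mathrm{Cost}(X,Q)$. Let $S$ be an optimal $(k,z)$-medoids clustering on $X$ among sets containing a center at $p$ and no center in the interior of the ball $B_r(x)$. Let $n_b$ be the number of points of $X$ assigned (by $Q$, i.e., to their closest center in $Q$) to centers of $Q$ lying in $B_{r/2}(x)$. Then there exists a constant $\gamma\ge1$ such that \[\Psi+n_b\cdot r^z\le\gamma\cdot\mathrm{Cost}(X,S).\]
   Context: $\mathrm{Cost}(X,C)=\sum_{y\in X}\min_{c\in C}\|y-c\|_2^z$. A $(k,z)$-medoids clustering is a set of at most $k$ centers chosen from $X$. $B_\rho(x)$ denotes the Euclidean ball of radius $\rho$ centered at $x$. ''Constant-factor approximation'' means within a multiplicative constant factor; the constant $\gamma$ may depend on these constants and on $z$. *)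

(* Defs.v *)
From HB Require Import structures.
From mathcomp Require Import all_boot all_order all_algebra.
From mathcomp Require Import reals exp.
Set Implicit Arguments. Unset Strict Implicit. Unset Printing Implicit Defensive.
Import Order.TTheory GRing.Theory Num.Theory.
Local Open Scope ring_scope.

(* Points of the grid [Delta]^d = {1,...,Delta}^d.  A point is a finite
   function 'I_d -> 'I_Delta; coordinate i of y is the integer (y i) + 1. *)
Definition point (d Delta : nat) := {ffun 'I_d -> 'I_Delta}.

Definition coord (R : realType) (d Delta : nat) (y : point d Delta) (i : 'I_d) : R :=
  ((y i).+1)%:R.

Definition dist (R : realType) (d Delta : nat) (y c : point d Delta) : R :=
  Num.sqrt (\sum_(i < d) (coord R y i - coord R c i) ^+ 2).

(* min_{c in C} ||y - c||_2^z  (convention: 0 when C is empty; only used with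
   nonempty C) *)
Definition mincost (R : realType) (d Delta : nat) (z : R)
  (y : point d Delta) (C : {set point d Delta}) : R :=
  match [pick c in C] with
  | Some c0 => \big[Order.min/powR (dist R y c0) z]_(c in C) powR (dist R y c) z
  | None => 0
  end.

Definition Cost (R : realType) (d Delta : nat) (z : R)
  (X C : {set point d Delta}) : R :=
  \sum_(y in X) mincost z y C.

Definition feasible_p (d Delta k : nat) (X : {set point d Delta})
  (p : point d Delta) (C : {set point d Delta}) : Prop :=
  C \subset X /\ (#|C| <= k)%N /\ p \in C.

(* Main.v *)
Require Import Defs.
From HB Require Import structures.
From mathcomp Require Import all_boot all_order all_algebra.
From mathcomp Require Import reals exp.
From mathcomp Require Import ring lra.
Import Order.TTheory GRing.Theory Num.Theory.
Local Open Scope ring_scope.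

Lemma cs_ineq (R : realType) (n : nat) (a b : 'I_n -> R) :
  (\sum_i a i * b i) ^+ 2 <= (\sum_i a i ^+ 2) * (\sum_i b i ^+ 2).
Proof.
have H : 0 <= \sum_i \sum_j (a i * b j - a j * b i) ^+ 2.
  by apply: sumr_ge0 => i _; apply: sumr_ge0 => j _; exact: sqr_ge0.
have E : \sum_i \sum_j (a i * b j - a j * b i) ^+ 2 =
   \sum_i \sum_j (a i ^+ 2 * b j ^+ 2) + \sum_i \sum_j (b i ^+ 2 * a j ^+ 2)
   - 2 * \sum_i \sum_j ((a i * b i) * (a j * b j)).
  rewrite mulr_sumr -big_split -sumrB /=; apply: eq_bigr => i _.
  rewrite mulr_sumr -big_split -sumrB /=; apply: eq_bigr => j _; ring.
move: H; rewrite E.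
under eq_bigr do rewrite -mulr_sumr.
under [X in _ + X - _]eq_bigr do rewrite -mulr_sumr.
under [X in _ - 2 * X]eq_bigr do rewrite -mulr_sumr.
rewrite -!mulr_suml expr2.
set A := \sum_i a i ^+ 2; set B := \sum_i b i ^+ 2; set S := \sum_i a i * b i.
lra.
Qed.

Lemma minkowski (R : realType) (n : nat) (a b : 'I_n -> R) :
  Num.sqrt (\sum_i (a i + b i) ^+ 2) <=
  Num.sqrt (\sum_i a i ^+ 2) + Num.sqrt (\sum_i b i ^+ 2).
Proof.
set A := \sum_i a i ^+ 2; set B := \sum_i b i ^+ 2.
have A0 : 0 <= A by apply: sumr_ge0 => i _; exact: sqr_ge0.
have B0 : 0 <= B by apply: sumr_ge0 => i _; exact: sqr_ge0.
have sA := sqrtr_ge0 A; have sB := sqrtr_ge0 B.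
have -> : Num.sqrt A + Num.sqrt B = Num.sqrt ((Num.sqrt A + Num.sqrt B) ^+ 2).
  by rewrite sqrtr_sqr ger0_norm // addr_ge0.
rewrite ler_sqrt; last exact: sqr_ge0.
have -> : \sum_i (a i + b i) ^+ 2 = A + B + 2 * \sum_i a i * b i.
  rewrite /A /B mulr_sumr -!big_split /=; apply: eq_bigr => i _; ring.
have -> : (Num.sqrt A + Num.sqrt B) ^+ 2 = A + B + 2 * (Num.sqrt A * Num.sqrt B).
  by rewrite sqrrD !sqr_sqrtr // mulr2n -[_ * _ + _ * _]mulr2n mulr_natl; ring.
suff : \sum_i a i * b i <= Num.sqrt A * Num.sqrt B by lra.
apply: (le_trans (ler_norm _)).
rewrite -sqrtr_sqr -sqrtrM //.
by rewrite ler_sqrt ?mulr_ge0 //; exact: cs_ineq.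
Qed.

Section Dist.
Variables (R : realType) (d Delta : nat).
Implicit Types x y w : point d Delta.

Lemma dist_ge0 x y : 0 <= dist R x y.
Proof. exact: sqrtr_ge0. Qed.

Lemma distC x y : dist R x y = dist R y x.
Proof.
rewrite /dist; congr Num.sqrt; apply: eq_bigr => i _.
by rewrite -sqrrN opprB.
Qed.

Lemma dist_tri x y w : dist R x y <= dist R x w + dist R w y.
Proof.
rewrite /dist.
have -> : \sum_(i < d) (Defs.coord R x i - Defs.coord R y i) ^+ 2 =
  \sum_(i < d) ((Defs.coord R x i - Defs.coord R w i) + (Defs.coord R w i - Defs.coord R y i)) ^+ 2.
  by apply: eq_bigr => i _; congr (_ ^+ 2); ring.
exact: minkowski.
Qed.

Lemma mincost_ge (z m : R) y (C : {set point d Delta}) c0 :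
  c0 \in C -> (forall c, c \in C -> m <= powR (dist R y c) z) ->
  m <= mincost z y C.
Proof.
move=> c0C H; rewrite /mincost; case: pickP => [c1 Hc1|H0]; last first.
  by move: (H0 c0); rewrite c0C.
elim/big_ind: _ => [|u v Hu Hv|c cC]; [exact: H | by rewrite le_min Hu Hv | exact: H].
Qed.

Lemma mincost_ge0 (z : R) y (C : {set point d Delta}) : 0 <= mincost z y C.
Proof.
rewrite /mincost; case: pickP => [c1 Hc1|//].
elim/big_ind: _ => [|u v Hu Hv|c cC]; [exact: powR_ge0 | by rewrite le_min Hu Hv | exact: powR_ge0].
Qed.

Lemma Cost_ge0 (z : R) (X C : {set point d Delta}) : 0 <= Cost z X C.
Proof. by apply: sumr_ge0 => y _; exact: mincost_ge0. Qed.

End Dist.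
Arguments mincost_ge {R d Delta}.
Arguments mincost_ge0 {R d Delta}.
Arguments Cost_ge0 {R d Delta}.
Arguments dist_tri R {d Delta}.
Arguments distC R {d Delta}.
Arguments dist_ge0 R {d Delta}.

Lemma final_step (R : realType) (P Psi n CS CQ a b m : R) :
  0 <= P -> Psi <= b * a * CS -> n * m <= CS + CQ -> CQ <= a * CS ->
  Psi + P * (n * m) <= (b * a + P * (1 + a)) * CS.
Proof.
move=> P0 h1 h2 h3.
have h4 : P * (n * m) <= P * (CS + CQ) by rewrite ler_wpM2l.
have h5 : P * CQ <= P * (a * CS) by rewrite ler_wpM2l.
rewrite mulrDr in h4.
have -> : (b * a + P * (1 + a)) * CS = b * a * CS + P * CS + P * (a * CS) by ring.
lra.
Qed.

Theorem lemma3p8 (R : realType) (z alpha beta : R) :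
  1 <= z -> 1 <= alpha -> 1 <= beta ->
  exists gamma : R, 1 <= gamma /\
  forall (d Delta k : nat) (X : {set point d Delta}) (x p : point d Delta)
         (Q S : {set point d Delta}) (Psi : R)
         (sigma : point d Delta -> point d Delta),
    x \in X -> p \in X ->
    let r := dist R x p in
    (* Q: alpha-approximation among sets with at most k centers containing p *)
    feasible_p k X p Q ->
    (forall C, feasible_p k X p C -> Cost z X Q <= alpha * Cost z X C) ->
    (* Psi: beta-approximation of Cost(X,Q) *)
    Cost z X Q / beta <= Psi -> Psi <= beta * Cost z X Q ->
    (* S: optimal among such sets with no center in the open ball B_r(x) *)
    feasible_p k X p S -> (forall s, s \in S -> r <= dist R x s) ->
    (forall C, feasible_p k X p C -> (forall c, c \in C -> r <= dist R x c) ->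
       Cost z X S <= Cost z X C) ->
    (* sigma: assignment of each point to a closest center of Q *)
    (forall y, y \in X -> sigma y \in Q /\
       (forall q, q \in Q -> dist R y (sigma y) <= dist R y q)) ->
    let n_b := #|[set y in X | dist R x (sigma y) <= r / 2]| in
    Psi + n_b%:R * powR r z <= gamma * Cost z X S.
Proof.
move=> z1 a1 b1.
have P4 : 0 <= powR 4 z := powR_ge0 _ _.
exists (beta * alpha + powR 4 z * (1 + alpha)); split.
  have : 1 <= beta * alpha by rewrite -[1]mulr1 ler_pM // ler01.
  have : 0 <= powR 4 z * (1 + alpha) by rewrite mulr_ge0 // ?P4; lra.
  lra.
move=> d Delta k X x p Q S Psi sigma xX pX r FQ HQ Hp1 Hp2 FS HSr HSopt Hsig.
cbv zeta; set n_b := #|[set y in X | _]|.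
have r0 : 0 <= r := dist_ge0 _ _ _.
set m := powR (r / 4) z.
have CS0 := Cost_ge0 z X S.
have CQ := HQ S FS.
have CQ0 := Cost_ge0 z X Q.
have Hpsi : Psi <= beta * alpha * Cost z X S.
  by rewrite -mulrA (le_trans Hp2) // ler_wpM2l //; lra.
have Hr : powR r z = powR 4 z * m.
  by rewrite /m -powRM //; [congr powR; field | lra].
have pS : p \in S by case: FS => _ [].
have pQ : p \in Q by case: FQ => _ [].
have Key : n_b%:R * m <= Cost z X S + Cost z X Q.
  rewrite /Cost -big_split /= (bigID (fun y => dist R x (sigma y) <= r / 2)) /=.
  rewrite -[n_b%:R * m]addr0; apply: lerD; last first.
    by apply: sumr_ge0 => y _; apply: addr_ge0; exact: mincost_ge0.
  rewrite /n_b mulr_natl -sumr_const.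
  have -> : \sum_(i in [set y in X | dist R x (sigma y) <= r / 2]) m =
    \sum_(y in X | dist R x (sigma y) <= r / 2) m.
    by apply: eq_bigl => y; rewrite inE.
  apply: ler_sum => y /andP [yX yB].
  have mono : forall t, r / 4 <= t -> m <= powR t z.
    move=> t Ht; apply: ge0_ler_powR => //; first lra.
      by rewrite nnegrE; lra.
    by rewrite nnegrE; lra.
  have [Hy|Hy] := lerP (dist R x y) (3 * r / 4).
    have : m <= mincost z y S.
      apply: (mincost_ge _ _ _ _ _ pS) => s sS; apply: mono.
      have := HSr s sS; have := dist_tri R x s y; lra.
    have := mincost_ge0 z y Q; lra.
  have : m <= mincost z y Q.
    apply: (mincost_ge _ _ _ _ _ pQ) => q qQ; apply: mono.
    case: (Hsig y yX) => _ /(_ q qQ).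
    have := dist_tri R x y (sigma y); rewrite (distC R (sigma y) y); lra.
  have := mincost_ge0 z y S; lra.
rewrite Hr [_%:R * _]mulrCA.
exact: (final_step _ _ _ _ _ _ _ _ _ P4 Hpsi Key CQ).
Qed.
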